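(* With the icosahedral setting of the context, let $\omega>0$, $n\ge2$ and $y\in\mathcal{I}$. Then \[ w_n(x;y)=\sum_{j=0}^{\lfloor n/2\rfloor}\left(-\frac{\tau+2}{4\omega}\right)^j\frac{1}{(15\kappa+\tfrac32+n-2j)_j}\,\frac{\nu(n)}{\nu(n-2j)}\,L_j^{(15\kappa+1/2+n-2j)}\left(\omega|x|^2\right)\phi_{n-2j}(x;y). \]
   Context: Let $\tau=(1+\sqrt5)/2$. Vectors in $\mathbb{R}^3$ are row vectors; $\langle x,y\rangle=\sum x_iy_i$, $|x|^2=\langle x,x\rangle$. Let $\kappa\ge0$ be real. Let $\mathcal{I}=\{(0,\pm\tau,\pm1),(\pm1,0,\pm\tau),(\pm\tau,\pm1,0)\}$. For $y_0\in\mathcal{I}$, $q_n(x;y_0)$ are defined by $\left(1-r\langle x,y_0\rangle\right)^{-1}\prod_{y\in\mathcal{I}}\left(1-r\langle x,y\rangle\right)^{-\kappa}=\sum_{n\ge0}q_n(x;y_0)r^n$. $\nu(n)=2^n(6\kappa+1)_s(5\kappa+\tfrac12)_t$ with $s=\lfloor n/2\rfloor$, $t=\lfloor (n+1)/2\rfloor$, $(a)_k=a(a+1)\cdots(a+k-1)$. For $n\ge0$ define $w_n(x;y_0)=\sum_{j=0}^{\lfloor n/2\rfloor}(-1)^j\frac{(\tau+2)^j}{(4\omega)^jj!}\frac{\nu(n)}{\nu(n-2j)}q_{n-2j}(x;y_0)$ and $\phi_n(x;y_0)=\sum_{j=0}^{\lfloor n/2\rfloor}\frac{(\tau+2)^j|x|^{2j}}{4^jj!\,(-15\kappa-n+1/2)_j}\frac{\nu(n)}{\nu(n-2j)}q_{n-2j}(x;y_0)$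 (so $\phi_0=1$). The Laguerre polynomial is $L_m^{(\alpha)}(s)=\frac{(\alpha+1)_m}{m!}\sum_{j=0}^m\frac{(-m)_j}{(\alpha+1)_j}\frac{s^j}{j!}$. *)

(* Defs.v *)
From mathcomp Require Import all_boot all_order all_algebra.
From mathcomp Require Import reals.
Set Implicit Arguments. Unset Strict Implicit. Unset Printing Implicit Defensive.
Import Order.TTheory GRing.Theory Num.Theory.
Local Open Scope ring_scope.

Section Icosa.
Variable R : realType.
Variable kappa : R.

Definition tau : R := (1 + Num.sqrt 5) / 2.

Definition vec3 (a b c : R) : 'rV[R]_3 :=
  \row_(i < 3) (if val i == 0%N then a else if val i == 1%N then b else c).

Definition inner (x y : 'rV[R]_3) : R := \sum_(i < 3) x 0 i * y 0 i.
Definition sqnorm (x : 'rV[R]_3) : R := inner x x.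

(* the 12 vertices of the icosahedron *)
Definition icos : seq 'rV[R]_3 :=
  [seq vec3 0 (s1 * tau) s2 | s1 <- [:: 1; -1], s2 <- [:: 1; -1]] ++
  [seq vec3 s1 0 (s2 * tau) | s1 <- [:: 1; -1], s2 <- [:: 1; -1]] ++
  [seq vec3 (s1 * tau) s2 0 | s1 <- [:: 1; -1], s2 <- [:: 1; -1]].

Definition poch (a : R) (k : nat) : R := \prod_(i < k) (a + i%:R).

(* formal power series in r, represented by coefficient sequences *)
Definition conv (a b : nat -> R) (n : nat) : R :=
  \sum_(i < n.+1) a i * b (n - i)%N.

(* coefficients of (1 - c r)^{-1} *)
Definition geom_coef (c : R) (k : nat) : R := c ^+ k.
(* coefficients of (1 - c r)^{-kappa} (binomial series):
   (kappa)_k c^k / k! *)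
Definition binser_coef (c : R) (k : nat) : R := poch kappa k * c ^+ k / (k`!)%:R.

(* q_n(x;y0): coefficient of r^n in
   (1 - r<x,y0>)^{-1} prod_{y in I} (1 - r<x,y>)^{-kappa} *)
Definition q (n : nat) (x y0 : 'rV[R]_3) : R :=
  foldr (fun y s => conv (binser_coef (inner x y)) s)
        (geom_coef (inner x y0)) icos n.

Definition nu (n : nat) : R :=
  2 ^+ n * poch (6 * kappa + 1) n./2 * poch (5 * kappa + 1 / 2) (n.+1)./2.

Definition w (omega : R) (n : nat) (x y0 : 'rV[R]_3) : R :=
  \sum_(j < n./2.+1)
    (-1) ^+ j * (tau + 2) ^+ j / ((4 * omega) ^+ j * (j`!)%:R)
    * (nu n / nu (n - 2 * j)) * q (n - 2 * j) x y0.

Definition phi (n : nat) (x y0 : 'rV[R]_3) : R :=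
  \sum_(j < n./2.+1)
    (tau + 2) ^+ j * sqnorm x ^+ j
    / (4 ^+ j * (j`!)%:R * poch (- 15 * kappa - n%:R + 1 / 2) j)
    * (nu n / nu (n - 2 * j)) * q (n - 2 * j) x y0.

End Icosa.

Definition laguerre (R : realType) (m : nat) (alpha s : R) : R :=
  poch (alpha + 1) m / (m`!)%:R *
  \sum_(j < m.+1) poch (- m%:R) j / poch (alpha + 1) j * (s ^+ j / (j`!)%:R).

(* Main.v *)
Require Import Defs.
From mathcomp Require Import all_boot all_order all_algebra.
From mathcomp Require Import reals.
From mathcomp Require Import ring lra zify.
Import Order.TTheory GRing.Theory Num.Theory.
Local Open Scope ring_scope.

Section Aux.
Variable R : realType.
Implicit Types (a g t : R).

Lemma natrS (k : nat) : k.+1%:R = k%:R + 1 :> R.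
Proof. by rewrite -addn1 natrD. Qed.

Lemma poch0 a : poch a 0 = 1.
Proof. by rewrite /poch big_ord0. Qed.

Lemma pochS a k : poch a k.+1 = a * poch (a + 1) k.
Proof.
rewrite /poch big_ord_recl /= addr0; congr (_ * _).
apply: eq_bigr => i _; rewrite /bump /= add1n natrS; ring.
Qed.

Lemma pochSr a k : poch a k.+1 = poch a k * (a + k%:R).
Proof. by rewrite /poch big_ord_recr. Qed.

Lemma poch_add a m k : poch a (m + k) = poch a m * poch (a + m%:R) k.
Proof.
elim: k => [|k IH]; first by rewrite addn0 poch0 mulr1.
by rewrite addnS !pochSr IH natrD addrA mulrA.
Qed.

Lemma poch_gt0 a k : 0 < a -> 0 < poch a k.
Proof.
move=> ha; apply: prodr_gt0 => i _.
have := ler0n R i; lra.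
Qed.

Lemma poch_neg g i : poch (1 - g - 2 * i%:R) i = (-1) ^+ i * poch (g + i%:R) i.
Proof.
elim: i g => [|i IH] g; first by rewrite !poch0 expr0 mulr1.
rewrite pochS.
have -> : 1 - g - 2 * i.+1%:R + 1 = 1 - (g + 1) - 2 * i%:R.
  by rewrite natrS; ring.
rewrite IH pochSr exprS.
have -> : g + i.+1%:R = g + 1 + i%:R by rewrite natrS; ring.
rewrite natrS; ring.
Qed.

Lemma poch_negnat m l : (l <= m)%N ->
  poch (- m%:R) l * ((m - l)`!)%:R = (-1) ^+ l * (m`!)%:R :> R.
Proof.
elim: l => [|l IH] hl; first by rewrite poch0 subn0 expr0 !mul1r.
have hl' : (l <= m)%N by apply: ltnW.
have H := IH hl'.
have e : (m - l = (m - l.+1).+1)%N by lia.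
rewrite e factS natrM -e natrB // in H.
rewrite pochSr exprS.
have -> : (-1) * (-1) ^+ l * (m`!)%:R = -1 * ((-1) ^+ l * (m`!)%:R) :> R by ring.
rewrite -H; ring.
Qed.


Lemma tri (F : nat -> nat -> R) N :
  \sum_(j < N.+1) \sum_(i < (N - j)%N.+1) F j i =
  \sum_(k < N.+1) \sum_(j < k.+1) F j (k - j)%N.
Proof.
elim: N => [|N IH]; first by rewrite !big_ord1.
rewrite big_ord_recr /= [RHS]big_ord_recr /= -IH subnn big_ord1.
rewrite [X in _ = _ + X]big_ord_recr /= subnn.
have -> : \sum_(j < N.+1) \sum_(i < (N.+1 - j).+1) F j i =
   \sum_(j < N.+1) (\sum_(i < (N - j).+1) F j i + F j (N.+1 - j)%N).
  apply: eq_bigr => j _.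
  have hj : (j <= N)%N by rewrite -ltnS.
  by rewrite subSn // big_ord_recr.
by rewrite big_split /= addrA.
Qed.


Lemma fact_neq0 m : (m`!)%:R != 0 :> R.
Proof. by rewrite pnatr_eq0 -lt0n fact_gt0. Qed.

Lemma poch_neq0 a k : 0 < a -> poch a k != 0.
Proof. by move=> ha; rewrite gt_eqF // poch_gt0. Qed.

Lemma lag_exp m a t : 0 < a + 1 ->
  laguerre m a t / poch (a + 1) m =
  \sum_(l < m.+1) (-t) ^+ l / (((m - l)`!)%:R * (l`!)%:R * poch (a + 1) l).
Proof.
move=> ha.
have hP := @poch_neq0 _ m ha.
have hm := fact_neq0 m.
rewrite /laguerre.
set S := \sum_(_ < _) _.
have -> : poch (a + 1) m / (m`!)%:R * S / poch (a + 1) m = S / (m`!)%:R by field; rewrite hm hP.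
rewrite /S mulr_suml; apply: eq_bigr => l _.
have hl : (l <= m)%N by rewrite -ltnS.
have H := @poch_negnat m l hl.
have hml := fact_neq0 (m - l).
have hl' := fact_neq0 l.
have hPl := @poch_neq0 _ l ha.
have -> : poch (- m%:R) l = (-1) ^+ l * (m`!)%:R / ((m - l)`!)%:R :> R.
  by rewrite -H mulfK.
rewrite [(- t) ^+ _]exprNn; set e := (-1) ^+ l; set tl := t ^+ l; field.
by rewrite hml hl' hPl hm.
Qed.


Lemma Sp_zero g p : 0 < g -> (0 < p)%N ->
  \sum_(i < p.+1) 1 / ((i`!)%:R * ((p - i)`!)%:R * poch (1 - g - 2 * i%:R) i
      * poch (g + 2 * i%:R + 1) (p - i)) = 0.
Proof.
move=> hg hp.
have hpn : p%:R != 0 :> R by rewrite pnatr_eq0 -lt0n.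
apply: (mulfI hpn); rewrite mulr0 mulr_sumr.
pose G (i : nat) : R := (-1) ^+ i * i%:R * ('C(p, i))%:R / ((p`!)%:R * poch (g + i%:R) p).
rewrite (eq_bigr (fun i : 'I_p.+1 => - (G i.+1 - G i))); last first.
  move=> [i hi'] _ /=.
  have hi : (i <= p)%N by rewrite -ltnS.
  have hi0 := ler0n R i.
  have gi : 0 < g + i%:R by lra.
  have hX := @poch_neq0 _ i gi.
  have gi2 : 0 < g + 2 * i%:R + 1 by lra.
  have hY := @poch_neq0 _ (p - i)%N gi2.
  have hp0 := ler0n R p.
  have n1 : g + i%:R + p%:R != 0 by apply/eqP; lra.
  have n2 : g + i%:R != 0 by apply/eqP; lra.
  have n3 : g + 2 * i%:R != 0 by apply/eqP; lra.
  have n4 : i%:R + 1 != 0 :> R by apply/eqP; lra.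
  have f1 := fact_neq0 i.
  have f2 := fact_neq0 (p - i).
  have f3 := fact_neq0 p.
  have HZ : poch (g + i%:R) p.+1 =
      poch (g + i%:R) i * (g + 2 * i%:R) * poch (g + 2 * i%:R + 1) (p - i).
    have e : (i + (p - i).+1)%N = p.+1 by rewrite addnS subnKC.
    rewrite -e poch_add pochS.
    have -> : g + i%:R + i%:R = g + 2 * i%:R by ring.
    by rewrite mulrA.
  have E1 : poch (g + i%:R) p = poch (g + i%:R) i * (g + 2 * i%:R)
       * poch (g + 2 * i%:R + 1) (p - i) / (g + i%:R + p%:R).
    by rewrite -HZ pochSr mulfK.
  have E2 : poch (g + (i%:R + 1)) p = poch (g + i%:R) i * (g + 2 * i%:R)
       * poch (g + 2 * i%:R + 1) (p - i) / (g + i%:R).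
    by rewrite addrA -HZ pochS [_ * poch _ _]mulrC mulfK.
  have Hc : ('C(p, i))%:R = (p`!)%:R / ((i`!)%:R * ((p - i)`!)%:R) :> R.
    by rewrite -(bin_fact hi) !natrM mulfK // mulf_neq0.
  have Hc1 : ('C(p, i.+1))%:R = (p%:R - i%:R) * ('C(p, i))%:R / (i%:R + 1) :> R.
    have := mul_bin_left p i.
    move/(congr1 (fun z => z%:R : R)); rewrite !natrM natrB // natrS => <-.
    by rewrite mulrC mulrA mulVf // mul1r.
  rewrite /G poch_neg E1 (natrS i) E2 Hc1 Hc exprS.
  have he : (-1) ^+ i != 0 :> R by rewrite expf_neq0 // oppr_eq0 oner_eq0.
  set e := (-1) ^+ i in he *.
  move: hX hY n1 n2 n3 n4 f1 f2 f3 he.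
  set X := poch _ i; set Y := poch _ (p - i); set F1 := (i`!)%:R; set F2 := ((p-i)`!)%:R.
  set F3 := (p`!)%:R; set I := i%:R; set P := p%:R.
  move=> hX hY n1 n2 n3 n4 f1 f2 f3 he.
  have he2 : e * e = 1 by rewrite /e -exprMn mulrNN mulr1 expr1n.
  rewrite [1 / _](_ : _ = e / (F1 * F2 * X * Y)); last first.
    by rewrite -{1}he2; field; rewrite he hX hY f1 f2.
  field.
  by rewrite n1 hY n3 hX f3 f2 f1 n2 n4.
rewrite sumrN -(big_mkord xpredT (fun i => G i.+1 - G i)) telescope_sumr //.
by rewrite /G bin_small // !(mulr0, mul0r) subrr oppr0.
Qed.


Lemma pochneg_neq0 g i : 0 < g -> poch (1 - g - 2 * i%:R) i != 0.
Proof.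
move=> hg; rewrite poch_neg mulf_neq0 //.
  by rewrite expf_neq0 // oppr_eq0 oner_eq0.
by apply: poch_neq0; have := ler0n R i; lra.
Qed.

Lemma core g t k : 0 < g ->
  \sum_(i < k.+1) (-t) ^+ i / ((i`!)%:R * poch (1 - g - 2 * i%:R) i)
     * (laguerre (k - i) (g + 2 * i%:R) t / poch (g + 2 * i%:R + 1) (k - i))
  = 1 / (k`!)%:R.
Proof.
move=> hg.
pose F (i l : nat) := (-t) ^+ i / ((i`!)%:R * poch (1 - g - 2 * i%:R) i) *
   ((-t) ^+ l / ((((k - i) - l)`!)%:R * (l`!)%:R * poch (g + 2 * i%:R + 1) l)).
rewrite (eq_bigr (fun i : 'I_k.+1 => \sum_(l < (k - i)%N.+1) F i l)); last first.
  move=> i _; rewrite lag_exp; last by have := ler0n R i; lra.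
  by rewrite mulr_sumr.
rewrite tri big_ord_recl /= big_ord1 /F !expr0 !poch0 subn0 subnn !fact0.
rewrite big1 ?addr0; first by rewrite /= subn0 !mul1r !mulr1 invr1 mul1r.
move=> p _; rewrite /bump /= add1n.
set c := (-t) ^+ p.+1 / (((k - p.+1)`!)%:R).
rewrite (eq_bigr (fun i : 'I_p.+2 => c * (1 / ((i`!)%:R * ((p.+1 - i)`!)%:R
      * poch (1 - g - 2 * i%:R) i * poch (g + 2 * i%:R + 1) (p.+1 - i))))).
  by rewrite -mulr_sumr Sp_zero // mulr0.
move=> [i hi] _ /=.
have hi' : (i <= p.+1)%N by rewrite -ltnS.
have -> : (k - i - (p.+1 - i) = k - p.+1)%N by lia.
rewrite /c.
have -> : (-t) ^+ p.+1 = (-t) ^+ i * (-t) ^+ (p.+1 - i) by rewrite -exprD subnKC.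
have h1 := fact_neq0 i.
have h2 := fact_neq0 (p.+1 - i).
have h3 := fact_neq0 (k - p.+1).
have h4 := @pochneg_neq0 g i hg.
have h5 : poch (g + 2 * i%:R + 1) (p.+1 - i) != 0.
  by apply: poch_neq0; have := ler0n R i; lra.
set A := (-t) ^+ i; set B := (-t) ^+ (p.+1 - i).
by field; rewrite h1 h2 h3 h4 h5.
Qed.


Lemma half_sub n j : (j <= n./2)%N -> ((n - 2 * j)./2 = n./2 - j)%N.
Proof.
move=> hj.
have e : (n - 2 * j = odd n + (n./2 - j).*2)%N.
  have := odd_double_half n; rewrite -!muln2; lia.
by rewrite e half_bit_double.
Qed.

End Aux.

Lemma nu_neq0 (R : realType) (kappa : R) m : 0 <= kappa -> nu kappa m != 0.
Proof.
move=> hk; rewrite /nu !mulf_neq0 //.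
- by rewrite expf_neq0 // pnatr_eq0.
- by apply: poch_neq0; lra.
- by apply: poch_neq0; lra.
Qed.



Lemma key (R : realType) (kappa omega : R) (n k : nat) (s : R) :
  0 <= kappa -> 0 < omega -> (2 * k <= n)%N ->
  \sum_(j < k.+1)
    ((- ((tau R + 2) / (4 * omega))) ^+ j / poch (15 * kappa + 3 / 2 + (n - 2 * j)%:R) j
     * laguerre j (15 * kappa + 1 / 2 + (n - 2 * j)%:R) (omega * s)
     * ((tau R + 2) ^+ (k - j) * s ^+ (k - j)
        / (4 ^+ (k - j) * ((k - j)`!)%:R
           * poch (- 15 * kappa - (n - 2 * j)%:R + 1 / 2) (k - j))))
  = (-1) ^+ k * (tau R + 2) ^+ k / ((4 * omega) ^+ k * (k`!)%:R).
Proof.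
move=> hk ho hn.
set u := (tau R + 2) / (4 * omega).
set g := 15 * kappa + 1 / 2 + (n - 2 * k)%:R.
have hg : 0 < g by rewrite /g; have := ler0n R (n - 2 * k); lra.
have hkf := fact_neq0 R k.
have h4o : (4 * omega) ^+ k != 0 by rewrite expf_neq0 //; apply/eqP; lra.
have -> : (-1) ^+ k * (tau R + 2) ^+ k / ((4 * omega) ^+ k * (k`!)%:R)
    = (- u) ^+ k * (1 / (k`!)%:R).
  rewrite [(- u) ^+ _]exprNn /u expr_div_n.
  set A := (-1) ^+ k; set B := (tau R + 2) ^+ k; set C := (4 * omega) ^+ k.
  by field; rewrite hkf h4o.
rewrite -(@core R g (omega * s) k hg) mulr_sumr.
rewrite (reindex_inj rev_ord_inj) /=.
apply: eq_bigr => [[i hi]] _ /=.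
rewrite subSS.
have hik : (i <= k)%N by rewrite -ltnS.
have -> : (k - (k - i) = i)%N by lia.
have en : ((n - 2 * (k - i)) = (n - 2 * k) + 2 * i)%N by lia.
rewrite en natrD natrM.
have -> : 15 * kappa + 3 / 2 + ((n - 2 * k)%:R + 2%:R * i%:R) = g + 2 * i%:R + 1.
  by rewrite /g; field.
have -> : 15 * kappa + 1 / 2 + ((n - 2 * k)%:R + 2%:R * i%:R) = g + 2 * i%:R.
  by rewrite /g; field.
have -> : - 15 * kappa - ((n - 2 * k)%:R + 2%:R * i%:R) + 1 / 2 = 1 - g - 2 * i%:R.
  by rewrite /g; field.
have hP1 : poch (g + 2 * i%:R + 1) (k - i) != 0.
  by apply: poch_neq0; have := ler0n R i; lra.
have hP2 := @pochneg_neq0 R g i hg.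
have hif := fact_neq0 R i.
have h4 : (4 : R) ^+ i != 0 by rewrite expf_neq0 // pnatr_eq0.
have -> : (- u) ^+ k = (- u) ^+ (k - i) * (- u) ^+ i by rewrite -exprD subnK.
have hbc : (- u) ^+ i * (- (omega * s)) ^+ i = (tau R + 2) ^+ i * s ^+ i / 4 ^+ i.
  rewrite -exprMn.
  have -> : - u * - (omega * s) = (tau R + 2) * s / 4.
    rewrite /u; field; apply/eqP; lra.
  by rewrite expr_div_n exprMn.
have -> : (tau R + 2) ^+ i * s ^+ i / (4 ^+ i * (i`!)%:R * poch (1 - g - 2 * i%:R) i)
   = (- u) ^+ i * (- (omega * s)) ^+ i / ((i`!)%:R * poch (1 - g - 2 * i%:R) i).
  rewrite hbc.
  set B := (tau R + 2) ^+ i; set C := s ^+ i; set D := (4 : R) ^+ i.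
  by field; rewrite hif hP2 h4.
set a := (- u) ^+ (k - i); set b := (- u) ^+ i; set c := (- (omega * s)) ^+ i.
set L := laguerre _ _ _.
by field; rewrite hP1 hP2 hif.
Qed.

Theorem mainTheorem7 (R : realType) (kappa omega : R) (n : nat)
    (x y : 'rV[R]_3) :
  0 <= kappa -> 0 < omega -> (2 <= n)%N -> y \in icos R ->
  w kappa omega n x y =
  \sum_(j < n./2.+1)
     (- ((tau R + 2) / (4 * omega))) ^+ j
     / poch (15 * kappa + 3 / 2 + (n - 2 * j)%:R) j
     * (nu kappa n / nu kappa (n - 2 * j))
     * laguerre j (15 * kappa + 1 / 2 + (n - 2 * j)%:R) (omega * sqnorm x)
     * phi kappa (n - 2 * j) x y.
Proof.
move=> hk ho hn hy.
set N := n./2.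
set s := sqnorm x.
pose E (k : nat) := nu kappa n / nu kappa (n - 2 * k) * q kappa (n - 2 * k) x y.
pose D (j i : nat) :=
    (- ((tau R + 2) / (4 * omega))) ^+ j / poch (15 * kappa + 3 / 2 + (n - 2 * j)%:R) j
     * laguerre j (15 * kappa + 1 / 2 + (n - 2 * j)%:R) (omega * s)
     * ((tau R + 2) ^+ i * s ^+ i
        / (4 ^+ i * (i`!)%:R
           * poch (- 15 * kappa - (n - 2 * j)%:R + 1 / 2) i)).
pose F (j i : nat) := D j i * E (j + i)%N.
rewrite [RHS](eq_bigr (fun j : 'I_N.+1 => \sum_(i < (N - j)%N.+1) F j i)); last first.
  move=> [j hj] _ /=.
  have hjN : (j <= N)%N by rewrite -ltnS.
  rewrite /phi half_sub // mulr_sumr; apply: eq_bigr => [[i hi]] _ /=.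
  rewrite /F /D /E.
  have -> : (n - 2 * j - 2 * i = n - 2 * (j + i))%N by lia.
  have HB : nu kappa n / nu kappa (n - 2 * j) * (nu kappa (n - 2 * j) / nu kappa (n - 2 * (j + i)))
      = nu kappa n / nu kappa (n - 2 * (j + i)).
    by rewrite mulrA divfK // nu_neq0.
  rewrite -HB; ring.
rewrite (@tri R F N) /w.
apply: eq_bigr => [[k hk']] _ /=.
have hkN : (k <= N)%N by rewrite -ltnS.
have h2k : (2 * k <= n)%N.
  have := odd_double_half n; rewrite -/N -muln2; lia.
rewrite (eq_bigr (fun j : 'I_k.+1 => D j (k - j)%N * E k)); last first.
  move=> [j hj] _ /=; by rewrite /F subnKC // -ltnS.
by rewrite -mulr_suml /D (@key R kappa omega n k s hk ho h2k) /E [RHS]mulrA.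
Qed.
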